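(* Let $\mu\ge 0$ be an integer and let $\mathcal{F}$ be a $(2\mu+1)$-uniform weak $\Delta$-system. (i) If the intersection size of $\mathcal{F}$ is $\mu+1$ and $|\mathcal{F}|\ge \mu^2+\mu+3$, then $\mathcal{F}$ is a strong $\Delta$-system. (ii) If the intersection size of $\mathcal{F}$ is $\mu$ and $|\mathcal{F}|\ge(\mu+1)^2+\mu+3$, then $\mathcal{F}$ is a strong $\Delta$-system.
   Context: A family $\mathcal{F}=\{S_1,\dots,S_m\}$ of (distinct) finite sets is $h$-uniform if $|S|=h$ for every $S\in\mathcal{F}$. It is a weak $\Delta$-system if there is an integer $\lambda$ (its intersection size) with $|S_i\cap S_j|=\lambda$ for all distinct $S_i,S_j\in\mathcal{F}$. It is a strong $\Delta$-system (sunflower) if there is a set $C$ (the core) with $S_i\cap S_j=C$ for all distinct $S_i,S_j\in\mathcal{F}$. *)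

(* Defs.v *)
From mathcomp Require Import all_boot.
Set Implicit Arguments. Unset Strict Implicit. Unset Printing Implicit Defensive.

Definition uniform (T : finType) (h : nat) (F : {set {set T}}) : Prop :=
  forall S, S \in F -> #|S| = h.

Definition weak_delta (T : finType) (lambda : nat) (F : {set {set T}}) : Prop :=
  forall S1 S2, S1 \in F -> S2 \in F -> S1 != S2 -> #|S1 :&: S2| = lambda.

Definition strong_delta (T : finType) (F : {set {set T}}) : Prop :=
  exists C : {set T},
    forall S1 S2, S1 \in F -> S2 \in F -> S1 != S2 -> S1 :&: S2 = C.

(* Main.v *)
Require Import Defs.
From mathcomp Require Import all_boot.
From mathcomp Require Import zify.
Set Implicit Arguments. Unset Strict Implicit. Unset Printing Implicit Defensive.

Lemma amgm (p q : nat) : 2 * (p * q) <= p ^ 2 + q ^ 2.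
Proof. have := (nat_AGM2 p q).1; rewrite sqrnD; lia. Qed.

Lemma arith_key d D E : 0 < d ->
  2*((d*E)*((d-1)*D+d))*(D*(E*d)) <= (d*E)^2*(D*((d-1)*D+d)) + ((d-1)*D+d)^2*(E*(d*(E+1))) ->
  D*E <= (d-1)*D + d*E + d.
Proof.
move=> dp ineq.
case: (posnP E) => [->|Ep]; first nia.
case: (posnP D) => [->|Dp]; first nia.
set b := (d-1)*D + d in ineq *.
have bp : 0 < b by rewrite /b; apply: leq_trans dp (leq_addl _ _).
have Xp : 0 < d * E * b by rewrite !muln_gt0 dp Ep bp.
have : d * E * b * (d * D * E) <= d * E * b * (b * (E + 1)).
  have e1 : 2*((d*E)*b)*(D*(E*d)) = 2 * (d * E * b * (d * D * E)) by nia.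
  have e2 : (d*E)^2*(D*b) + b^2*(E*(d*(E+1))) =
     d * E * b * (d * D * E) + d * E * b * (b * (E + 1)) by nia.
  move: ineq; rewrite e1 e2; lia.
rewrite leq_pmul2l // /b; case: d dp {ineq b bp Xp} => // d _; rewrite subn1 /=. nia.
Qed.
Lemma arith_dich d D E : d^2+d+2 <= D+E -> D*E <= (d-1)*D+d*E+d -> 0 < d -> D <= d.+1 \/ D+E <= D+d.
Proof. move=> h1 h2 h3; case: (leqP D d.+1) => h; [by left| right]. nia. Qed.

Lemma amgm2 a b p q : 2*(a*b)*(p*q) <= a^2*(p*p) + b^2*(q*q).
Proof.
have := amgm (a*p) (b*q).
have -> : 2*(a*b)*(p*q) = 2 * (a*p*(b*q)) by nia.
have -> : a^2*(p*p) + b^2*(q*q) = (a*p)^2 + (b*q)^2 by nia.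
done.
Qed.

Lemma ar2 d N s1 s2 h r : s1 + s2 = d*(N+1) -> s1 <= h*N -> s2 <= r*d.+1 -> h + r = 2*d -> d^2+d+2 <= N -> d <= h.
Proof. move=> e1 e2 e3 e4 e5; case: (leqP d h) => // hl; nia. Qed.
Lemma ar3 d N w : (N-1)*(w-d) <= w*d -> d^2+d+2 <= N -> w <= d.
Proof. move=> e1 e2; case: (leqP w d) => // hl; nia. Qed.
Lemma ar4 d N hv : hv*(N-d) <= N*d -> d^2+d+2 <= N -> hv <= d.
Proof. move=> e1 e2; case: (leqP hv d) => // hl; nia. Qed.

Section H.
Variable U : finType.

Lemma cardsE' (X : {set U}) : #|X| = \sum_x (x \in X).
Proof. by rewrite -sum1_card big_mkcond /=; apply: eq_bigr => x _; case: (x \in X). Qed.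

Lemma card_setP (P : {set {set U}}) (p : {set U} -> bool) :
  #|[set T in P | p T]| = \sum_(T in P) p T.
Proof.
rewrite -sum1_card big_mkcond /= [RHS]big_mkcond /=.
by apply: eq_bigr => T _; rewrite inE; case: (T \in P); case: (p T).
Qed.

Lemma card_setP' (X : {set U}) (p : U -> bool) :
  #|[set x in X | p x]| = \sum_(x in X) p x.
Proof.
rewrite -sum1_card big_mkcond /= [RHS]big_mkcond /=.
by apply: eq_bigr => T _; rewrite inE; case: (T \in X); case: (p T).
Qed.

Lemma EX (X : {set U}) (P : {set {set U}}) (p : U -> {set U} -> bool) :
  \sum_(x in X) #|[set T in P | p x T]| = \sum_(T in P) #|[set x in X | p x T]|.
Proof.
under eq_bigr do rewrite card_setP.
rewrite exchange_big; apply: eq_bigr => T _; by rewrite card_setP'.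
Qed.

Lemma DC (P Q : {set {set U}}) (f g : {set U} -> {set U}) :
  \sum_y ((\sum_(S in P) (y \in f S)) * (\sum_(C in Q) (y \in g C))) =
  \sum_(S in P) \sum_(C in Q) #|f S :&: g C|.
Proof.
under eq_bigr do rewrite big_distrl /=.
rewrite exchange_big; apply: eq_bigr => S _.
under eq_bigr do rewrite big_distrr /=.
rewrite exchange_big; apply: eq_bigr => C _.
rewrite cardsE'; apply: eq_bigr => y _; rewrite inE.
by case: (y \in f S); case: (y \in g C).
Qed.

Definition sd (S A : {set U}) := (S :\: A) :|: (A :\: S).

Lemma F1 (S A : {set U}) : #|sd S A| + 2 * #|S :&: A| = #|S| + #|A|.
Proof.
rewrite !cardsE' big_distrr -!big_split /=; apply: eq_bigr => x _; rewrite !inE.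
by case: (x \in S); case: (x \in A).
Qed.

Lemma F2 (S T A : {set U}) :
  #|sd S A :&: sd T A| + #|S :&: A| + #|T :&: A| = #|S :&: T| + #|A|.
Proof.
rewrite !cardsE' -!big_split /=; apply: eq_bigr => x _; rewrite !inE.
by case: (x \in S); case: (x \in T); case: (x \in A).
Qed.

Lemma F3 (S T A : {set U}) : sd S A = sd T A -> S = T.
Proof.
move=> h; apply/setP => x; have := congr1 (fun X : {set U} => x \in X) h; rewrite /sd /= !inE.
by case: (x \in S); case: (x \in T); case: (x \in A).
Qed.

Lemma F4 (S A : {set U}) : A :&: sd S A = A :\: S.
Proof. apply/setP => x; rewrite !inE; by case: (x \in S); case: (x \in A). Qed.

End H.


Section C.
Variable U : finType.

Lemma core (d : nat) (G : {set {set U}}) :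
  uniform (2*d) G -> weak_delta d G -> d^2 + d + 2 <= #|G| ->
  exists Y : {set U}, #|Y| = d /\ forall D, D \in G -> Y \subset D.
Proof.
move=> hu hw hN; set N := #|G| in hN.
have [D0 D0G] : exists D0, D0 \in G.
  by apply/set0Pn; rewrite -card_gt0 -/N; lia.
have d_gt0 : 0 < d.
  case: d hu hw hN => [|d] // hu _ hN.
  have : G \subset [set set0].
    by apply/subsetP => D DG; rewrite inE; apply/eqP/cards0_eq; rewrite hu.
  move/subset_leq_card; rewrite cards1 -/N; lia.
pose deg x := #|[set T in G | x \in T]|.
pose miss x := #|[set T in G | x \notin T]|.
have degmiss x : deg x + miss x = N.
  rewrite /deg /miss !card_setP -big_split /= /N -sum1_card.
  by apply: eq_bigr => T _; case: (x \in T).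
have K1 D : D \in G -> \sum_(x in D) deg x = d * (N + 1).
  move=> DG; rewrite /deg (EX D G (fun x T => x \in T)).
  have -> : \sum_(T in G) #|[set x in D | x \in T]| = \sum_(T in G) #|D :&: T|.
    by apply: eq_bigr => T _; congr #|_|; apply/setP => x; rewrite !inE.
  rewrite (big_setD1 D DG) setIid hu //.
  rewrite (eq_bigr (fun _ => d)); last first.
    move=> T; rewrite !inE => /andP[TD TG]; apply: hw => //; by rewrite eq_sym.
  rewrite sum_nat_const; have := cardsD1 D G; rewrite DG -/N /=; nia.
have dich x : deg x <= d.+1 \/ N <= deg x + d.
  set H := [set S in G | x \in S]; set Ec := [set C in G | x \notin C].
  set D := #|H|; set E := #|Ec|.
  have HE : D + E = N by apply: degmiss.
  pose u y := \sum_(S in H) (y \in S :\ x).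
  pose z y := \sum_(C in Ec) (y \in C).
  have Su : \sum_y u y * u y = D * ((d-1)*D + d).
    rewrite /u (DC H H (fun S => S :\ x) (fun S => S :\ x)).
    rewrite -sum_nat_const; apply: eq_bigr => S SH.
    have [SG xS] : S \in G /\ x \in S by move: SH; rewrite inE => /andP.
    rewrite (big_setD1 S SH) setIid /=.
    rewrite (eq_bigr (fun _ => d - 1)); last first.
      move=> S'; rewrite !inE => /andP[S'S /andP[S'G xS']].
      have : #|S :&: S'| = d by apply: hw => //; rewrite eq_sym.
      have -> : (S :\ x) :&: (S' :\ x) = (S :&: S') :\ x.
        by apply/setP => y; rewrite !inE; case: (y == x); case: (y \in S).
      have := cardsD1 x (S :&: S'); rewrite !inE xS xS' /=; lia.
    rewrite sum_nat_const; have := cardsD1 S H; rewrite SH -/D.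
    have := cardsD1 x S; rewrite xS hu //; move=> /= h1 /= h2.
    move: #|S :\ x| #|H :\ S| h1 h2 d_gt0; rewrite /D; move: #|H| => DD s h h1 h2 dp; nia.
  have Sz : \sum_y z y * z y = E * (d * (E + 1)).
    rewrite /z (DC Ec Ec id id).
    rewrite -sum_nat_const; apply: eq_bigr => S SH.
    have SG : S \in G by move: SH; rewrite inE => /andP[].
    rewrite (big_setD1 S SH) setIid /= hu //.
    rewrite (eq_bigr (fun _ => d)); last first.
      move=> S'; rewrite !inE => /andP[S'S /andP[S'G xS']].
      by apply: hw => //; rewrite eq_sym.
    rewrite sum_nat_const; have := cardsD1 S Ec; rewrite SH /= => h1.
    move: #|Ec :\ S| h1; rewrite /E; move: #|Ec| => EE s h1; nia.
  have Suz : \sum_y u y * z y = D * (E * d).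
    rewrite /u /z (DC H Ec (fun S => S :\ x) id).
    rewrite -sum_nat_const; apply: eq_bigr => S SH.
    have [SG xS] : S \in G /\ x \in S by move: SH; rewrite inE => /andP.
    rewrite -sum_nat_const; apply: eq_bigr => C; rewrite inE => /andP[CG xC] /=.
    have -> : (S :\ x) :&: C = S :&: C.
      apply/setP => y; rewrite !inE; case: (eqVneq y x) => [->|] //=.
      by rewrite (negbTE xC) andbF.
    apply: hw => //; apply/eqP => SC; by rewrite SC (negbTE xC) in xS.
  set a := d * E; set b := (d-1)*D + d.
  have ineq : 2 * (a * b) * (D * (E * d)) <= a^2 * (D * b) + b^2 * (E * (d * (E + 1))).
    rewrite -Suz -Su -Sz !big_distrr -big_split /=.
    apply: leq_sum => y _; exact: amgm2.
  have key := arith_key d_gt0 ineq.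
  have := arith_dich (leq_trans hN (eq_leq (esym HE))) key d_gt0.
  rewrite /deg -/H -/D HE; case=> h; [by left | right]; lia.
have degN x : deg x <= N.
  by apply: subset_leq_card; apply/subsetP => T; rewrite inE => /andP[].
set Hv := [set x | N <= deg x + d].
have heavy_light x : x \notin Hv -> deg x <= d.+1.
  by rewrite inE; case: (dich x) => // ->.
have S2 D : D \in G -> d <= #|D :&: Hv|.
  move=> DG; have := K1 D DG; rewrite (big_setID Hv) /=.
  have b1 : \sum_(x in D :&: Hv) deg x <= #|D :&: Hv| * N.
    by rewrite -sum_nat_const; apply: leq_sum => x _; exact: degN x.
  have b2 : \sum_(x in D :\: Hv) deg x <= #|D :\: Hv| * d.+1.
    by rewrite -sum_nat_const; apply: leq_sum => x; rewrite inE => /andP[xH _]; exact: heavy_light.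
  have c := cardsID Hv D; rewrite (hu D DG) in c.
  move=> e; exact: (ar2 e b1 b2 c hN).
have S3 D : D \in G -> #|D :&: Hv| <= d.
  move=> DG; set W := D :&: Hv.
  have m1 : \sum_(w in W) miss w <= #|W| * d.
    rewrite -sum_nat_const; apply: leq_sum => w; rewrite inE => /andP[_ wH].
    have := degmiss w; move: wH; rewrite inE; lia.
  have m2 : \sum_(w in W) miss w = \sum_(T in G) #|W :\: T|.
    rewrite /miss (EX W G (fun x T => x \notin T)); apply: eq_bigr => T _.
    by apply: eq_card => x; rewrite !inE andbC.
  have m3 : (N - 1) * (#|W| - d) <= \sum_(T in G) #|W :\: T|.
    rewrite (big_setD1 D DG) /=; apply: leq_trans (leq_addl _ _).
    have -> : N - 1 = #|G :\ D| by have := cardsD1 D G; rewrite DG /N /=; lia.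
    rewrite -sum_nat_const; apply: leq_sum => T; rewrite !inE => /andP[TD TG].
    rewrite cardsD.
    have : #|W :&: T| <= d.
      rewrite -(hw D T) //; last by rewrite eq_sym.
      by apply: subset_leq_card; apply: setSI; exact: subsetIl.
    lia.
  apply: (ar3 _ hN); rewrite -m2 in m3; exact: leq_trans m3 m1.
have S4 : #|Hv| <= d.
  have e : \sum_(x in Hv) deg x = \sum_(T in G) #|Hv :&: T|.
    rewrite /deg (EX Hv G (fun x T => x \in T)); apply: eq_bigr => T _.
    by apply: eq_card => x; rewrite !inE.
  have l1 : #|Hv| * (N - d) <= \sum_(x in Hv) deg x.
    rewrite -sum_nat_const; apply: leq_sum => x; rewrite inE; lia.
  have l2 : \sum_(T in G) #|Hv :&: T| <= N * d.
    rewrite /N -sum_nat_const; apply: leq_sum => T TG; rewrite setIC; exact: S3.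
  apply: (ar4 _ hN); rewrite e in l1; exact: leq_trans l1 l2.
exists Hv; split.
  apply/eqP; rewrite eqn_leq S4 /=.
  exact: leq_trans (S2 D0 D0G) (subset_leq_card (subsetIr _ _)).
move=> D DG; apply/setIidPr; apply/eqP; rewrite eqEcard subsetIr /=.
exact: leq_trans S4 (S2 D DG).
Qed.
End C.


Section T3.
Variable U : finType.

Lemma tr_props (F : {set {set U}}) k l d A : A \in F -> uniform k F -> weak_delta l F -> k = l + d ->
  #|[set sd S A | S in F :\ A]| = #|F| - 1 /\ uniform (2*d) [set sd S A | S in F :\ A]
  /\ weak_delta d [set sd S A | S in F :\ A].
Proof.
move=> AF hu hw hk; split; [|split].
- rewrite card_in_imset; last by move=> S T _ _; exact: F3.
  have := cardsD1 A F; rewrite AF /= => ->; by rewrite add1n subn1.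
- move=> D /imsetP[S]; rewrite !inE => /andP[SA SF] ->.
  have := F1 S A; rewrite (hu S SF) (hu A AF) (hw S A SF AF SA); lia.
- move=> D1 D2 /imsetP[S]; rewrite !inE => /andP[SA SF] -> /imsetP[T]; rewrite !inE => /andP[TA TF] -> hne.
  have ST : S != T by apply: contraNneq hne => ->.
  have := F2 S T A; rewrite (hw S A) // (hw T A) // (hw S T) // (hu A AF); lia.
Qed.

Lemma finish (F : {set {set U}}) k l d A (Y : {set U}) : A \in F -> uniform k F -> weak_delta l F -> k = l + d ->
  #|Y| = d -> Y \subset A -> (forall S, S \in F -> S != A -> Y \subset sd S A) -> strong_delta F.
Proof.
move=> AF hu hw hk hY YA hS.
have CS S : S \in F -> A :\: Y \subset S.
  move=> SF; case: (eqVneq S A) => [->|SA]; first exact: subsetDl.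
  have e : Y = A :\: S.
    apply/eqP; rewrite eqEcard -F4 subsetI YA hS //= F4.
    rewrite cardsD (hw A S) ?(hu A AF) ?hY //; [lia | by rewrite eq_sym].
  apply/subsetP => x; rewrite !inE => /andP[xY xA].
  apply/negPn/negP => xS; have : x \in Y by rewrite e !inE xS xA.
  by rewrite (negbTE xY).
have cC : #|A :\: Y| = l by rewrite cardsD (setIidPr YA) hY (hu A AF); lia.
exists (A :\: Y) => S1 S2 S1F S2F ne.
by apply/eqP; rewrite eq_sym eqEcard subsetI !CS //= (hw S1 S2) // cC leqnn.
Qed.

End T3.


Lemma case1 (T : finType) (mu : nat) (F : {set {set T}}) :
  uniform (2 * mu + 1) F -> weak_delta (mu + 1) F -> mu ^ 2 + mu + 3 <= #|F| -> strong_delta F.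
Proof.
move=> hu hw hm.
have [A AF] : exists A, A \in F by apply/set0Pn; rewrite -card_gt0; lia.
have hk : 2 * mu + 1 = (mu + 1) + mu by lia.
have [c1 [u1 w1]] := tr_props AF hu hw hk.
set G := [set sd S A | S in F :\ A] in c1 u1 w1.
have hG : mu ^ 2 + mu + 2 <= #|G| by rewrite c1; lia.
have [Y [hY YG]] := core u1 w1 hG.
have hS S : S \in F -> S != A -> Y \subset sd S A.
  by move=> SF SA; apply: YG; apply/imsetP; exists S => //; rewrite !inE SA SF.
apply: (finish AF hu hw hk hY _ hS).
case: (boolP (Y \subset A)) => // /subsetPn[y yY yA]; exfalso.
have cYA : #|Y :&: A| < mu.
  have := cardsID A Y; have : 0 < #|Y :\: A| by apply/card_gt0P; exists y; rewrite inE yA.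
  rewrite hY; lia.
pose f S := (A :\: S) :\: Y.
have f1 S : S \in F :\ A -> 1 <= #|f S|.
  rewrite !inE => /andP[SA SF].
  have cAS : #|A :\: S| = mu.
    rewrite cardsD (hw A S) ?(hu A AF) //; [lia | by rewrite eq_sym].
  have : #|(A :\: S) :&: Y| <= #|Y :&: A|.
    by apply: subset_leq_card; apply/subsetP => x; rewrite !inE => /andP[/andP[_ ->] ->].
  rewrite /f cardsD cAS; lia.
have s1 : #|F :\ A| * 1 <= \sum_(S in F :\ A) #|f S|.
  by rewrite -sum_nat_const; apply: leq_sum => S; exact: f1.
have s2 : \sum_(S in F :\ A) #|f S| = \sum_(x in A) #|[set S in F :\ A | x \in f S]|.
  rewrite (EX A (F :\ A) (fun x S => x \in f S)); apply: eq_bigr => S _.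
  by apply: eq_card => x; rewrite !inE; case: (x \in A); rewrite ?andbF.
have s3 : \sum_(x in A) #|[set S in F :\ A | x \in f S]| <= #|A| * 1.
  rewrite -sum_nat_const; apply: leq_sum => x _.
  apply/card_le1_eqP => S1 S2; rewrite !inE => /andP[/andP[S1A S1F] xS1] /andP[/andP[S2A S2F] xS2].
  apply/eqP; apply/negPn/negP => ne.
  have m1 : sd S1 A \in G by apply/imsetP; exists S1 => //; rewrite !inE S1A S1F.
  have m2 : sd S2 A \in G by apply/imsetP; exists S2 => //; rewrite !inE S2A S2F.
  have n12 : sd S1 A != sd S2 A by apply: contra ne => /eqP /F3 ->.
  have e : Y = sd S1 A :&: sd S2 A.
    by apply/eqP; rewrite eqEcard subsetI !hS //= hY (w1 _ _ m1 m2 n12).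
  move: xS1 xS2 => /and3P[xY1 xS1 xA] /and3P[_ xS2 _].
  have : x \in Y by rewrite e /sd !inE xS1 xS2 xA.
  by rewrite (negbTE xY1).
have cF := cardsD1 A F; rewrite AF /= in cF.
have cA := hu A AF.
rewrite s2 in s1.
have h := leq_trans s1 s3.
move: h hm cF cA; move: #|F :\ A| #|F| #|A| => a b c; nia.
Qed.

Lemma case2 (T : finType) (mu : nat) (F : {set {set T}}) :
  uniform (2 * mu + 1) F -> weak_delta mu F -> (mu + 1) ^ 2 + mu + 3 <= #|F| -> strong_delta F.
Proof.
move=> hu hw hm.
have Sinj : injective (@Some T) := Some_inj.
pose up (S : {set T}) : {set option T} := Some @: S.
have upinj : injective up := imset_inj Sinj.
have cup S : #|up S| = #|S| by rewrite card_imset.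
have upI S1 S2 : up S1 :&: up S2 = up (S1 :&: S2).
  by rewrite /up imsetI //; move=> x y _ _; exact: Sinj.
have noneup S : None \notin up S by apply/imsetP => -[x].
set F' := up @: F.
have cF' : #|F'| = #|F| by rewrite card_imset.
have u' : uniform (2 * mu + 1) F'.
  by move=> D /imsetP[S SF ->]; rewrite cup hu.
have w' : weak_delta mu F'.
  move=> D1 D2 /imsetP[S1 S1F ->] /imsetP[S2 S2F ->] ne.
  rewrite upI cup hw //; by apply: contra ne => /eqP ->.
have [A AF] : exists A, A \in F by apply/set0Pn; rewrite -card_gt0; lia.
set A' := up A.
have AF' : A' \in F' by apply: imset_f.
have hk : 2 * mu + 1 = mu + (mu + 1) by lia.
have [c0 [u0 w0]] := tr_props AF' u' w' hk.
set G0 := [set sd S A' | S in F' :\ A'] in c0 u0 w0.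
have NG0 D : D \in G0 -> None \notin D.
  move=> /imsetP[S]; rewrite !inE => /andP[_ /imsetP[S0 _ ->]] ->.
  by rewrite /sd !inE (negbTE (noneup S0)) (negbTE (noneup A)).
set E0 := None |: A'.
set G := E0 |: G0.
have E0G0 : E0 \notin G0.
  by apply/negP => /NG0; rewrite /E0 setU11.
have cG : #|G| = #|F|.
  by rewrite cardsU1 E0G0 c0 cF' /= subnKC // card_gt0; apply/set0Pn; exists A.
have cE0 : #|E0| = 2 * (mu + 1) by rewrite cardsU1 noneup cup hu //=; lia.
have IE0 D : D \in G0 -> #|E0 :&: D| = mu + 1.
  move=> DG0; have hD := NG0 D DG0.
  have -> : E0 :&: D = A' :&: D.
    apply/setP => x; rewrite !inE; case: (eqVneq x None) => [->|_] /=; last done.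
    by rewrite (negbTE hD) !andbF.
  move: DG0 => /imsetP[S]; rewrite !inE => /andP[SA SF] ->.
  rewrite F4 cardsD (w' A' S) ?(u' A' AF') //; [lia | by rewrite eq_sym].
have uG : uniform (2 * (mu + 1)) G.
  by move=> D; rewrite in_setU1 => /orP[/eqP -> | /u0].
have wG : weak_delta (mu + 1) G.
  move=> D1 D2; rewrite !in_setU1 => /orP[/eqP -> | D1G] /orP[/eqP -> | D2G] ne.
  - by rewrite eqxx in ne.
  - exact: IE0.
  - by rewrite setIC; exact: IE0.
  - exact: w0.
have hG : (mu + 1) ^ 2 + (mu + 1) + 2 <= #|G| by rewrite cG; lia.
have [Y [hY YG]] := core uG wG hG.
have [D1 D1G0] : exists D1, D1 \in G0 by apply/set0Pn; rewrite -card_gt0 c0 cF'; lia.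
have YA : Y \subset A'.
  apply/subsetP => x xY.
  have : x \in E0 by apply: (subsetP (YG E0 (setU11 _ _))).
  rewrite !inE => /orP[/eqP xN|] //.
  have : x \in D1 by apply: (subsetP (YG D1 (setU1r _ D1G0))).
  by rewrite xN (negbTE (NG0 D1 D1G0)).
have hS S : S \in F' -> S != A' -> Y \subset sd S A'.
  move=> SF SA; apply: YG; apply/setU1r/imsetP; exists S => //; by rewrite !inE SA SF.
have [C' hC'] := finish AF' u' w' hk hY YA hS.
exists [set x | Some x \in C'] => S1 S2 S1F S2F ne.
have ne' : up S1 != up S2 by apply: contra ne => /eqP /upinj ->.
have := hC' (up S1) (up S2) (imset_f _ S1F) (imset_f _ S2F) ne'.
rewrite upI => <-; apply/setP => x; rewrite !inE /up.
by rewrite (mem_imset _ _ Sinj) !inE.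
Qed.

Theorem lemma7 (T : finType) (mu : nat) (F : {set {set T}}) :
  uniform (2 * mu + 1) F ->
  (weak_delta (mu + 1) F -> mu ^ 2 + mu + 3 <= #|F| -> strong_delta F) /\
  (weak_delta mu F -> (mu + 1) ^ 2 + mu + 3 <= #|F| -> strong_delta F).
Proof. move=> hu; split; [exact: case1 | exact: case2]. Qed.
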